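(* Let $G$ be a nilpotent group of class $k$, let $v(\bar x,\bar z)$ be a group word in variables $\bar x=(x_1,\dots,x_n)$, $\bar z$ and their inverses, and let $\bar g$ be a tuple of elements of $G$ (of the length of $\bar z$) and $c\in G$. If the set $\{\bar h\in G^n:v(\bar h,\bar g)=c\}$ is $2^k$-large in $G^n$, then $v(\bar h,\bar g)=c$ for all $\bar h\in G^n$.
   Context: A subset $X$ of a group $K$ is $m$-large in $K$ if the intersection of any $m$ left translates $a_1X\cap\dots\cap a_mX$ ($a_i\in K$) is non-empty. *)

(* Defs.v *)
From mathcomp Require Import all_boot.

Set Implicit Arguments.
Unset Strict Implicit.
Unset Printing Implicit Defensive.

Record group := Group {
  carrier :> Type;
  gmul : carrier -> carrier -> carrier;
  ginv : carrier -> carrier;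
  gone : carrier;
  gmulA : forall x y z, gmul x (gmul y z) = gmul (gmul x y) z;
  gmul1 : forall x, gmul gone x = x;
  gmulV : forall x, gmul (ginv x) x = gone
}.

Arguments gmul {g}.
Arguments ginv {g}.
Arguments gone {g}.

Section Power.
Variables (G : group) (n : nat).
Definition pmul (a b : {ffun 'I_n -> G}) : {ffun 'I_n -> G} :=
  [ffun i => gmul (a i) (b i)].
Definition pinv (a : {ffun 'I_n -> G}) : {ffun 'I_n -> G} :=
  [ffun i => ginv (a i)].
Definition pone : {ffun 'I_n -> G} := [ffun _ => gone].
Lemma pmulA x y z : pmul x (pmul y z) = pmul (pmul x y) z.
Proof. by apply/ffunP => i; rewrite !ffunE gmulA. Qed.
Lemma pmul1 x : pmul pone x = x.
Proof. by apply/ffunP => i; rewrite !ffunE gmul1. Qed.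
Lemma pmulV x : pmul (pinv x) x = pone.
Proof. by apply/ffunP => i; rewrite !ffunE gmulV. Qed.
Definition power_group : group := Group pmulA pmul1 pmulV.
End Power.

Definition large (K : group) (m : nat) (X : K -> Prop) : Prop :=
  forall a : 'I_m -> K,
    exists y : K, forall i : 'I_m, exists x : K, X x /\ y = gmul (a i) x.

Inductive gen (G : group) (S : G -> Prop) : G -> Prop :=
| gen_in x : S x -> gen S x
| gen_one : gen S gone
| gen_mul x y : gen S x -> gen S y -> gen S (gmul x y)
| gen_inv x : gen S x -> gen S (ginv x).

Definition comm (G : group) (x y : G) : G :=
  gmul (gmul (ginv x) (ginv y)) (gmul x y).

(* Lower central series: lcs G 0 = gamma_1(G) = G,
   lcs G (i+1) = gamma_{i+2}(G) = [gamma_{i+1}(G), G]. *)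
Fixpoint lcs (G : group) (i : nat) : G -> Prop :=
  match i with
  | 0 => fun _ => True
  | i.+1 => gen (fun z => exists x y, @lcs G i x /\ z = comm x y)
  end.

Definition trivial_sub (G : group) (H : G -> Prop) : Prop :=
  forall x, H x -> x = gone.

Definition nilpotent_class (G : group) (k : nat) : Prop :=
  trivial_sub (@lcs G k) /\ forall j, j < k -> ~ trivial_sub (@lcs G j).

(* Group words in variables x_1..x_n, z_1..z_m and their inverses:
   a list of literals (variable, inverted?). *)
Definition word (n m : nat) := seq (('I_n + 'I_m) * bool).

Definition eval_word (G : group) n m (v : word n m)
    (h : 'I_n -> G) (g : 'I_m -> G) : G :=
  foldr (fun l acc =>
           let x := match l.1 with inl i => h i | inr j => g j end in
           gmul (if l.2 then ginv x else x) acc) gone v.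

(* Main.v *)
Require Import Defs.
From mathcomp Require Import all_boot.
From Stdlib Require Import FunctionalExtensionality.
From mathcomp Require Import zify.
Set Implicit Arguments. Unset Strict Implicit. Unset Printing Implicit Defensive.

Section GroupLemmas.
Variable G : group.
Implicit Types x y z : G.
Lemma gmulA' x y z : gmul (gmul x y) z = gmul x (gmul y z).
Proof. by rewrite gmulA. Qed.
Lemma gmulV1 x y : gmul (ginv x) (gmul x y) = y.
Proof. by rewrite gmulA gmulV gmul1. Qed.
Lemma gmulVr x : gmul x (ginv x) = gone.
Proof.
transitivity (gmul (ginv (ginv x)) (gmul (ginv x) (gmul x (ginv x)))).
  by rewrite gmulV1.
by rewrite (gmulA (ginv x)) gmulV gmul1 gmulV.
Qed.
Lemma gmulr1 x : gmul x gone = x.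
Proof. by rewrite -(gmulV x) gmulA gmulVr gmul1. Qed.
Lemma gmulV2 x y : gmul x (gmul (ginv x) y) = y.
Proof. by rewrite gmulA gmulVr gmul1. Qed.
Lemma ginvK x : ginv (ginv x) = x.
Proof. by rewrite -[LHS]gmulr1 -(gmulV x) gmulV1. Qed.
Lemma ginv1 : ginv (@gone G) = gone.
Proof. by rewrite -{2}(gmulV (@gone G)) gmulr1. Qed.
Lemma ginv_uniq x y : gmul x y = gone -> ginv x = y.
Proof. by move=> h; rewrite -[LHS]gmulr1 -h gmulV1. Qed.
Lemma ginvM x y : ginv (gmul x y) = gmul (ginv y) (ginv x).
Proof. by apply: ginv_uniq; rewrite gmulA' gmulV2 gmulVr. Qed.

Lemma test x y z : gmul (ginv (gmul x (ginv y))) (gmul (gmul x z) (ginv (gmul y z))) = gone.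
Proof. Abort.
End GroupLemmas.

Ltac gsimpl := repeat (rewrite ?(gmulA', gmul1, gmulr1, gmulV, gmulVr, gmulV1, gmulV2, ginvK, ginv1, ginvM)).
Ltac geq := rewrite /comm; gsimpl; done.

Section LCS.
Variable G : group.
Implicit Types x y z g : G.
Notation L := (@lcs G).

Lemma lcs_one i : L i gone.
Proof. by case: i => [|i] //=; apply: gen_one. Qed.
Lemma lcs_mul i x y : L i x -> L i y -> L i (gmul x y).
Proof. by case: i => [|i] //= *; apply: gen_mul. Qed.
Lemma lcs_inv i x : L i x -> L i (ginv x).
Proof. by case: i => [|i] //= *; apply: gen_inv. Qed.
Lemma lcs_conj i x g : L i x -> L i (gmul (ginv g) (gmul x g)).
Proof.
elim: i x g => [|i IH] x g //= h.
elim: h g => {x} [z [x [y [hx ->]]]|| x y _ IHx _ IHy| x _ IHx] g.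
- apply: gen_in; exists (gmul (ginv g) (gmul x g)), (gmul (ginv g) (gmul y g)); split; first exact: IH.
  geq.
- by rewrite gmul1 gmulV; apply: gen_one.
- have -> : gmul (ginv g) (gmul (gmul x y) g) = gmul (gmul (ginv g) (gmul x g)) (gmul (ginv g) (gmul y g)) by geq.
  exact: gen_mul.
- have -> : gmul (ginv g) (gmul (ginv x) g) = ginv (gmul (ginv g) (gmul x g)) by geq.
  exact: gen_inv.
Qed.
Lemma lcs_commL i x y : L i x -> L i.+1 (comm x y).
Proof. by move=> h; apply: gen_in; exists x, y. Qed.
Lemma lcs_commR i x y : L i y -> L i.+1 (comm x y).
Proof.
move=> h; have -> : comm x y = ginv (comm y x) by geq.
exact/lcs_inv/lcs_commL.
Qed.
Lemma lcs_succ i x : L i.+1 x -> L i x.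
Proof.
elim => {x} [z [x [y [hx ->]]]|| x y _ IHx _ IHy| x _ IHx].
- have -> : comm x y = gmul (ginv x) (gmul (ginv y) (gmul x y)) by geq.
  exact/lcs_mul/lcs_conj/hx/lcs_inv.
- exact: lcs_one.
- exact: lcs_mul.
- exact: lcs_inv.
Qed.
Lemma lcs_mono i j x : i <= j -> L j x -> L i x.
Proof.
move=> /subnKC <-; elim: (j - i) => [|d IH]; first by rewrite addn0.
by rewrite addnS => /lcs_succ.
Qed.
Lemma lcs_conj' i x g : L i x -> L i (gmul g (gmul x (ginv g))).
Proof. by move=> /(lcs_conj (ginv g)); rewrite ginvK. Qed.

Lemma three a b x y : L a x -> L b y -> L (a + b).+1 (comm x y).
Proof.
elim: b a x y => [|b IH] a x y hx.
  by rewrite addn0 => _; apply: lcs_commL.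
move=> /= hy; elim: hy => {y} [z [s [t [hs ->]]]|| y1 y2 _ IH1 _ IH2| y _ IHy];
  match goal with |- gen _ ?t => change (L (a + b.+1).+1 t) end.
- (* Hall-Witt *)
  set N := L (a + b.+1).+1.
  have h1 : N (comm (comm x (ginv s)) (ginv t)).
    rewrite /N addnS; apply: lcs_commL; exact/IH/lcs_inv.
  have h2 : N (comm (comm (ginv t) (ginv x)) s).
    rewrite /N addnS -addSn; apply: IH => //; exact/lcs_commR/lcs_inv.
  have hw : comm x (comm s t) = gmul (ginv t) (gmul (gmul (gmul (ginv x) (gmul (comm (comm (ginv t) (ginv x)) s) x)) (gmul (ginv s) (gmul (comm (comm x (ginv s)) (ginv t)) s))) t).
    geq.
  rewrite hw; apply: lcs_conj; apply: lcs_mul; exact: lcs_conj.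
- have -> : comm x gone = gone by geq.
  exact: lcs_one.
- have -> : comm x (gmul y1 y2) = gmul (comm x y2) (gmul (ginv y2) (gmul (comm x y1) y2)) by geq.
  by apply: lcs_mul => //; apply: lcs_conj.
- have -> : comm x (ginv y) = ginv (gmul y (gmul (comm x y) (ginv y))) by geq.
  exact/lcs_inv/lcs_conj'.
Qed.
End LCS.

Section Poly.
Variables K G : group.
Notation L := (@lcs G).
Implicit Types f g p u : K -> G.

Definition D (a : K) f : K -> G := fun x => gmul (ginv (f x)) (f (gmul a x)).
Definition fmul f g : K -> G := fun x => gmul (f x) (g x).
Definition finv f : K -> G := fun x => ginv (f x).
Definition fconj p f : K -> G := fun x => gmul (p x) (gmul (f x) (ginv (p x))).
Definition fcomm u f : K -> G :=
  fun x => gmul (ginv (f x)) (gmul (u x) (gmul (f x) (ginv (u x)))).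

Fixpoint E (d i : nat) f : Prop :=
  match d with
  | 0 => forall x, L i (f x)
  | d.+1 => (forall x, L i (f x)) /\ forall a, E d i.+1 (D a f)
  end.
Definition P d f := forall a, E d 0 (D a f).

Lemma E_val d i f : E d i f -> forall x, L i (f x).
Proof. by case: d => [|d] //= []. Qed.

Lemma E_fuel d i f : E d.+1 i f -> E d i f.
Proof.
elim: d i f => [|d IH] i f [hv hd] //=.
by split => // a; apply: IH.
Qed.
Lemma E_fuel_le d e i f : d <= e -> E e i f -> E d i f.
Proof.
move=> /subnKC <-; elim: (e - d) => [|m IH]; first by rewrite addn0.
by rewrite addnS => /E_fuel.
Qed.
Lemma E_lvl d i j f : i <= j -> E d j f -> E d i f.
Proof.
elim: d i j f => [|d IH] i j f hij /=.
  by move=> h x; apply: lcs_mono (h x).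
case=> hv hd; split; first by move=> x; apply: lcs_mono (hv x).
by move=> a; apply: IH (hd a).
Qed.
Lemma E_const d i c : L i c -> E d i (fun _ => c).
Proof.
elim: d i c => [|d IH] i c hc //=; split => // a.
have -> : D a (fun _ => c) = fun _ => gone by apply: functional_extensionality => x; rewrite /D gmulV.
exact/IH/lcs_one.
Qed.
Lemma P_of_E d i f : E d.+1 i f -> P d f.
Proof. by case=> _ h a; apply: E_lvl (h a). Qed.

Lemma D_mul a f g : D a (fmul f g) = fmul (fconj (finv g) (D a f)) (D a g).
Proof. apply: functional_extensionality => x; rewrite /D/fmul/fconj/finv; geq. Qed.
Lemma D_inv a f : D a (finv f) = fconj f (finv (D a f)).
Proof. apply: functional_extensionality => x; rewrite /D/fmul/fconj/finv; geq. Qed.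
Lemma D_conj a p f : D a (fconj p f) =
  fconj p (fmul (fcomm (D a p) f) (fconj (D a p) (D a f))).
Proof. apply: functional_extensionality => x; rewrite /D/fmul/fconj/finv/fcomm; geq. Qed.
Lemma D_comm a u f : D a (fcomm u f) =
  fmul (fmul (fmul (fcomm (finv (D a f)) (fcomm u f))
                   (fmul (fconj u (fcomm (D a u) f)) (fcomm (finv (D a f)) (fconj u (fcomm (D a u) f)))))
             (fcomm u (D a f)))
       (fconj u (fcomm (D a u) (D a f))).
Proof. apply: functional_extensionality => x; rewrite /D/fmul/fconj/finv/fcomm; geq. Qed.

Lemma vm d i f g : E d i f -> E d i g -> forall x, L i (fmul f g x).
Proof. by move=> /E_val hf /E_val hg x; apply: lcs_mul. Qed.
Lemma vi d i f : E d i f -> forall x, L i (finv f x).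
Proof. by move=> /E_val hf x; apply: lcs_inv. Qed.
Lemma vc d i f p : E d i f -> forall x, L i (fconj p f x).
Proof. by move=> /E_val hf x; apply: lcs_conj'. Qed.
Lemma vk d a b u f : E d a u -> E d b f -> forall x, L (a + b).+1 (fcomm u f x).
Proof.
move=> /E_val hu /E_val hf x.
have -> : fcomm u f x = comm (f x) (ginv (u x)) by rewrite /fcomm; geq.
by rewrite addnC; apply: three => //; apply: lcs_inv.
Qed.

Lemma big d :
 (forall i f g, E d i f -> E d i g -> E d i (fmul f g)) /\
 (forall i f, E d i f -> E d i (finv f)) /\
 (forall i f p, E d i f -> P d p -> E d i (fconj p f)) /\
 (forall a b u f, E d a u -> E d b f -> E d (a + b).+1 (fcomm u f)).
Proof.
elim: d => [|d [Hm [Hi [Hc Hk]]]].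
  split; first by move=> i f g hf hg; exact: vm hf hg.
  split; first by move=> i f hf; exact: vi hf.
  split; first by move=> i f p hf _; exact: vc hf.
  by move=> a b u f hu hf; exact: vk hu hf.
have Dinv i f : E d.+1 i f -> forall a, E d i.+1 (D a (finv f)).
  move=> hf a; rewrite D_inv; apply: (Hc); first by apply: (Hi); exact: hf.2.
  exact: P_of_E hf.
have Einv i f : E d.+1 i f -> E d.+1 i (finv f).
  by move=> hf; split; [exact: vi hf | exact: Dinv hf].
split.
  move=> i f g hf hg; split; first exact: vm hf hg.
  move=> a; rewrite D_mul; apply: (Hm); last exact: hg.2.
  apply: (Hc); first exact: hf.2.
  exact: P_of_E (Einv _ _ hg).
split; first exact: Einv.
split.
  move=> i f p hf hp; split; first exact: vc hf.
  move=> a; rewrite D_conj; apply: (Hc); last by move=> b; apply: E_fuel.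
  apply: (Hm).
    exact: (Hk 0 i _ _ (E_fuel (hp a)) (E_fuel hf)).
  apply: (Hc); first exact: hf.2.
  exact: P_of_E (hp a).
move=> a b u f hu hf; split; first exact: vk hu hf.
move=> c; rewrite D_comm.
have u' := E_fuel hu; have f' := E_fuel hf.
have hT := hf.2 c; have hU := hu.2 c.
have hTi := Hi _ _ hT.
have hg := Hk _ _ _ _ u' f'.
have hPu : P d u := P_of_E hu.
have hZ := Hc _ _ _ (Hk _ _ _ _ hU f') hPu.
have hZ' := Hk _ _ _ _ hTi hZ.
have h1 := Hk _ _ _ _ hTi hg.
have h3 := Hk _ _ _ _ u' hT.
have h4 := Hc _ _ _ (Hk _ _ _ _ hU hT) hPu.
apply: (Hm); last by apply: E_lvl h4; lia.
apply: (Hm); last by apply: E_lvl h3; lia.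
apply: (Hm); first by apply: E_lvl h1; lia.
apply: (Hm); first by apply: E_lvl hZ; lia.
by apply: E_lvl hZ'; lia.
Qed.

Lemma P_inv k f : P k f -> P k (finv f).
Proof.
have [_ [Hi [Hc _]]] := big k.
by move=> hf a; rewrite D_inv; apply: Hc => //; apply: Hi.
Qed.
Lemma P_mul k f g : P k f -> P k g -> P k (fmul f g).
Proof.
have [Hm [_ [Hc _]]] := big k.
move=> hf hg a; rewrite D_mul; apply: Hm => //; apply: Hc => //; exact: P_inv.
Qed.
Lemma P_const k c : P k (fun _ => c).
Proof.
move=> a; have -> : D a (fun _ => c) = fun _ => gone by apply: functional_extensionality => x; rewrite /D gmulV.
exact/E_const/lcs_one.
Qed.
Lemma P_ext k f g : (forall x, f x = g x) -> P k f -> P k g.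
Proof. by move=> e; have -> : f = g by apply: functional_extensionality. Qed.

Lemma large_mono m (X Y : K -> Prop) : large m X -> (forall x, X x -> Y x) -> large m Y.
Proof.
move=> H hXY b; have [y hy] := H b; exists y => i.
by have [x [hx ->]] := hy i; exists x; split => //; apply: hXY.
Qed.
Lemma large_D m (X : K -> Prop) a : large (m + m) X -> large m (fun x => X x /\ X (gmul a x)).
Proof.
move=> H b.
have [y hy] := H (fun i => match split i with inl j => b j | inr j => gmul (b j) (ginv a) end).
exists y => j.
have [x1 [h1 e1]] := hy (lshift m j).
have [x2 [h2 e2]] := hy (rshift m j).
rewrite /lshift /rshift in e1 e2.
have := unsplitK (inl j : 'I_m + 'I_m); rewrite /unsplit /= => E1; rewrite E1 in e1.
have := unsplitK (inr j : 'I_m + 'I_m); rewrite /unsplit /= => E2; rewrite E2 in e2.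
exists x1; split => //; split => //.
have -> : x1 = gmul (ginv (b j)) y by rewrite e1 gmulV1.
by rewrite e2; gsimpl.
Qed.
Lemma large_ne m (X : K -> Prop) : 0 < m -> large m X -> exists x, X x.
Proof.
move=> hm H; have [y hy] := H (fun _ => gone).
by have [x [hx _]] := hy (Ordinal hm); exists x.
Qed.

Lemma const_of_D f c x0 : (forall a x, D a f x = gone) -> f x0 = c -> forall x, f x = c.
Proof.
move=> hD hx0 x.
have e a y : f (gmul a y) = f y.
  have := hD a y; rewrite /D => h.
  by rewrite -(gmulV2 (f y) (f (gmul a y))) h gmulr1.
by rewrite -hx0 -(e (gmul x (ginv x0)) x0); congr f; gsimpl.
Qed.

Lemma L1 d i f c : E d.+1 i f -> trivial_sub (L (i + d).+1) ->
  large (2 ^ d) (fun x => f x = c) -> forall x, f x = c.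
Proof.
elim: d i f c => [|d IH] i f c hf ht hl.
  have [x0 hx0] := large_ne (isT : 0 < 2 ^ 0) hl.
  apply: const_of_D hx0 => a x; apply: ht; rewrite addn0.
  exact: hf.2 a x.
have [x0 hx0] := large_ne (expn_gt0 2 d.+1) hl.
apply: const_of_D hx0 => a.
apply: (IH i.+1 (D a f) gone (hf.2 a)); first by rewrite addSnnS.
have e : 2 ^ d.+1 = 2 ^ d + 2 ^ d by rewrite expnS mul2n addnn.
rewrite e in hl; move: (large_D a hl) => hl2; apply: (large_mono hl2) => x [h1 h2].
by rewrite /D h1 h2 gmulV.
Qed.
End Poly.

Lemma word_P (G : group) (k n m : nat) (v : word n m) (g : 'I_m -> G) :
  P k (fun h : power_group G n => eval_word v h g).
Proof.
elim: v => [|l v IH] /=; first exact: P_const.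
have hl : P k (fun h : power_group G n =>
   (let x := match l.1 with inl i => h i | inr j => g j end in if l.2 then ginv x else x)).
  case: l => [[i|j] b] /=; last by exact: P_const.
  have hi : P k (fun h : power_group G n => ginv (h i)).
    move=> a.
    have -> : D a (fun h : power_group G n => ginv (h i)) = fun _ => ginv (a i).
      apply: functional_extensionality => x; rewrite /D /= ffunE; geq.
    by apply: E_const.
  case: b; first exact: hi.
  by apply: P_ext (P_inv hi) => x; rewrite /finv ginvK.
exact: (P_mul hl IH).
Qed.

Theorem theorem6p5 (G : group) (k n m : nat) (v : word n m)
    (g : 'I_m -> G) (c : G) :
  nilpotent_class G k ->
  @large (power_group G n) (2 ^ k)
        (fun h : power_group G n => eval_word v h g = c) ->
  forall h : power_group G n, eval_word v h g = c.
Proof.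
case=> ht _ hl.
have hP := word_P k v g.
case: k ht hl hP => [|d] ht hl hP.
  move=> h; have [x0 hx0] := large_ne (isT : 0 < 2 ^ 0) hl.
  by rewrite -hx0 (ht (eval_word v h g) I) (ht (eval_word v x0 g) I).
have [x0 hx0] := large_ne (expn_gt0 2 d.+1) hl.
apply: const_of_D hx0 => a.
apply: (L1 (i := 0) (hP a)) => //.
have e : 2 ^ d.+1 = 2 ^ d + 2 ^ d by rewrite expnS mul2n addnn.
rewrite e in hl; move: (large_D a hl) => hl2; apply: (large_mono hl2) => x [h1 h2].
by rewrite /D h1 h2 gmulV.
Qed.
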